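(* ${\bf K^\boxdot}$ is sound and strongly complete with respect to the class of all bimodal frames: for every $\Gamma\subseteq\mathcal{L}(\boxdot)$ and $\phi\in\mathcal{L}(\boxdot)$, $\Gamma\vdash_{{\bf K^\boxdot}}\phi$ iff $\phi$ is true at every state of every bimodal model at which all formulas of $\Gamma$ are true.
   Context: Fix a nonempty set $\mathbf{P}$ of propositional variables. A bimodal model is $\langle S,R_1,R_2,V\rangle$ with $S$ nonempty, $R_1,R_2\subseteq S\times S$, $V:\mathbf{P}\to\mathcal{P}(S)$. $\mathcal{L}(\boxdot):\ \phi::=p\mid\neg\phi\mid(\phi\wedge\phi)\mid\boxdot\phi$ (other connectives, $\top,\bot$ abbreviations). Truth: $\mathcal{M},s\vDash\boxdot\phi$ iff for all $t,u$ with $sR_1t$ and $sR_2u$, ($\mathcal{M},t\vDash\phi\iff\mathcal{M},u\vDash\phi$); atoms and Booleans as usual. ${\bf K^\boxdot}$ has axioms: all instances of propositional tautologies; $\boxdot\top$; $\boxdot\phi\leftrightarrow\boxdot\neg\phi$; $\boxdot\phi\wedge\boxdot\psi\to\boxdot(\phi\wedge\psi)$; $\boxdot\phi\to\boxdot(\phi\vee\psi)\vee\boxdot(\neg\phi\vee\chi)$; and rules: modus ponens and RE: from $\phi\leftrightarrow\psi$ infer $\boxdot\phi\leftrightarrow\boxdot\psi$. *)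

(* Defs.v *)
From Stdlib Require Import List.
Import ListNotations.
Set Implicit Arguments.

Section Syntax.
Variable P : Type.

Inductive form : Type :=
| Atom : P -> form
| Neg : form -> form
| And : form -> form -> form
| Dot : form -> form.

Definition Or (a b : form) := Neg (And (Neg a) (Neg b)).
Definition Imp (a b : form) := Neg (And a (Neg b)).
Definition Iff (a b : form) := And (Imp a b) (Imp b a).
Definition Top (p : P) := Neg (And (Atom p) (Neg (Atom p))).

(* propositional tautologies: true under every Boolean valuation treating
   atoms and boxdot-formulas as propositional letters *)
Fixpoint peval (v : form -> bool) (f : form) : bool :=
  match f with
  | Atom _ => v f
  | Neg a => negb (peval v a)
  | And a b => andb (peval v a) (peval v b)
  | Dot _ => v f
  end.

Definition tautology (f : form) : Prop := forall v, peval v f = true.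

Inductive thm : form -> Prop :=
| AxTaut : forall f, tautology f -> thm f
| AxTop : forall p, thm (Dot (Top p))
| AxNeg : forall f, thm (Iff (Dot f) (Dot (Neg f)))
| AxAnd : forall f g, thm (Imp (And (Dot f) (Dot g)) (Dot (And f g)))
| AxOr : forall f g h,
    thm (Imp (Dot f) (Or (Dot (Or f g)) (Dot (Or (Neg f) h))))
| MP : forall f g, thm (Imp f g) -> thm f -> thm g
| RE : forall f g, thm (Iff f g) -> thm (Iff (Dot f) (Dot g)).

Fixpoint imps (l : list form) (f : form) : form :=
  match l with
  | [] => f
  | x :: l' => Imp x (imps l' f)
  end.

Definition deriv (Gamma : form -> Prop) (f : form) : Prop :=
  exists l : list form, (forall x, In x l -> Gamma x) /\ thm (imps l f).

End Syntax.

Arguments Atom {P}.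

(* bimodal models <S, R1, R2, V>; S nonempty is witnessed by a state *)
Record model (P : Type) : Type := Model {
  st : Type;
  R1 : st -> st -> Prop;
  R2 : st -> st -> Prop;
  V : P -> st -> Prop
}.

Fixpoint sat (P : Type) (M : model P) (s : st M) (f : form P) {struct f} : Prop :=
  match f with
  | Atom p => V M p s
  | Neg a => ~ sat M s a
  | And a b => sat M s a /\ sat M s b
  | Dot a => forall t u, R1 M s t -> R2 M s u -> (sat M t a <-> sat M u a)
  end.

(* Main.v *)
Require Import Defs.
From Stdlib Require Import List Classical ClassicalEpsilon FunctionalExtensionality PropExtensionality Bool.
Import ListNotations.
Set Implicit Arguments.

Definition subset {X : Type} (A B : X -> Prop) := forall x, A x -> B x.
Definition addx {X : Type} (S : X -> Prop) (x : X) : X -> Prop := fun y => S y \/ y = x.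
Definition unionF {X : Type} (D0 : X -> Prop) (F : (X -> Prop) -> Prop) : X -> Prop :=
  fun x => D0 x \/ exists S, F S /\ S x.

Inductive tower {X : Type} (D0 : X -> Prop) (nx : (X -> Prop) -> X -> Prop) : (X -> Prop) -> Prop :=
| tw0 : tower D0 nx D0
| twS : forall S, tower D0 nx S -> tower D0 nx (nx S)
| twU : forall F, (forall S, F S -> tower D0 nx S) -> tower D0 nx (unionF D0 F).

Lemma set_ext {X : Type} (A B : X -> Prop) : subset A B -> subset B A -> A = B.
Proof. intros H1 H2. apply functional_extensionality; intro x.
  apply propositional_extensionality; split; auto. Qed.

Lemma tower_D0 {X : Type} (D0 : X -> Prop) nx (Hinc : forall S, subset S (nx S)) S :
  tower D0 nx S -> subset D0 S.
Proof.
  induction 1 as [|S _ IH|F _ IH].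
  - intros x h; exact h.
  - intros x h; apply Hinc, IH, h.
  - intros x h; left; exact h.
Qed.

Definition extreme {X : Type} (D0 : X -> Prop) nx (C : X -> Prop) :=
  forall B, tower D0 nx B -> subset B C -> ~ subset C B -> subset (nx B) C.

Lemma lemma1 {X : Type} (D0 : X -> Prop) nx (Hinc : forall S, subset S (nx S)) C :
  tower D0 nx C -> extreme D0 nx C -> forall B, tower D0 nx B -> subset B C \/ subset (nx C) B.
Proof.
  intros HtC HC B HB. induction HB as [|B HB IH|F HF IH].
  - left; apply (tower_D0 Hinc HtC).
  - destruct IH as [IH|IH].
    + destruct (classic (subset C B)) as [h|h].
      * right. rewrite (set_ext IH h). intros x hx; exact hx.
      * left. apply HC; auto.
    + right. intros x hx. apply Hinc, IH, hx.
  - destruct (classic (exists S, F S /\ subset (nx C) S)) as [[S [hS h]]|h].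
    + right. intros x hx. right. exists S. split; auto.
    + left. intros x [hx|[S [hS hx]]].
      * apply (tower_D0 Hinc HtC), hx.
      * destruct (IH S hS) as [h'|h']; [apply h', hx|].
        exfalso; apply h; exists S; auto.
Qed.

Lemma lemma2 {X : Type} (D0 : X -> Prop) nx (Hinc : forall S, subset S (nx S)) :
  forall C, tower D0 nx C -> extreme D0 nx C.
Proof.
  intros C HC. induction HC as [|C HC IH|F HF IH]; intros B HB h1 h2.
  - exfalso. apply h2. apply (tower_D0 Hinc HB).
  - destruct (lemma1 Hinc HC IH HB) as [h|h]; [|exfalso; apply h2, h].
    destruct (classic (subset C B)) as [h'|h'].
    + rewrite (set_ext h h'). intros x hx; exact hx.
    + intros x hx. apply Hinc. apply (IH B HB h h' x hx).
  - destruct (classic (exists S, F S /\ ~ subset S B)) as [[S [hS hSB]]|hn].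
    + destruct (lemma1 Hinc (HF S hS) (IH S hS) HB) as [h|h].
      * intros x hx. right. exists S. split; auto. apply (IH S hS B HB h hSB x hx).
      * exfalso. apply hSB. intros x hx. apply h, Hinc, hx.
    + exfalso. apply h2. intros x [hx|[S [hS hx]]].
      * apply (tower_D0 Hinc HB), hx.
      * apply NNPP. intro hB. apply hn. exists S. split; [exact hS|].
        intro hs. apply hB, hs, hx.
Qed.

Lemma chain {X : Type} (D0 : X -> Prop) nx (Hinc : forall S, subset S (nx S)) A B :
  tower D0 nx A -> tower D0 nx B -> subset A B \/ subset B A.
Proof.
  intros hA hB. destruct (lemma1 Hinc hA (lemma2 Hinc hA) hB) as [h|h];
  [right; exact h| left; intros x hx; apply h, Hinc, hx].
Qed.

Definition fincons {X : Type} (q : list X -> Prop) (S : X -> Prop) :=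
  forall l, (forall x, In x l -> S x) -> q l.

Definition nxt {X : Type} (q : list X -> Prop) (S : X -> Prop) : X -> Prop :=
  match excluded_middle_informative (exists x, ~ S x /\ fincons q (addx S x)) with
  | left h => addx S (proj1_sig (constructive_indefinite_description _ h))
  | right _ => S
  end.

Lemma nxt_inc {X : Type} (q : list X -> Prop) S : subset S (nxt q S).
Proof. unfold nxt. destruct excluded_middle_informative; intros x hx; [left|]; auto. Qed.

Lemma nxt_cons {X : Type} (q : list X -> Prop) S : fincons q S -> fincons q (nxt q S).
Proof. unfold nxt. destruct excluded_middle_informative as [h|h]; auto.
  intros _; exact (proj2 (proj2_sig (constructive_indefinite_description _ h))). Qed.

Lemma nxt_new {X : Type} (q : list X -> Prop) S :
  (exists x, ~ S x /\ fincons q (addx S x)) -> exists x, ~ S x /\ nxt q S x.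
Proof. intro h. unfold nxt. destruct excluded_middle_informative as [h'|h']; [|contradiction].
  pose proof (proj2_sig (constructive_indefinite_description _ h')) as [hx _].
  eexists; split; [exact hx|]. right; reflexivity. Qed.

Lemma lindenbaum {X : Type} (q : list X -> Prop) (D0 : X -> Prop) : fincons q D0 ->
  exists M, subset D0 M /\ fincons q M /\ forall x, fincons q (addx M x) -> M x.
Proof.
  intro H0.
  assert (Hinc : forall S, subset S (nxt q S)) by apply nxt_inc.
  assert (Hc : forall S, tower D0 (nxt q) S -> fincons q S).
  { intros S HS. induction HS as [|S HS IH|F HF IH].
    - exact H0.
    - apply nxt_cons, IH.
    - intros l hl.
      assert (exists T, (T = D0 \/ F T) /\ subset (fun x => In x l) T) as [T [hT hl']].
      { clear IH. induction l as [|a l IHl].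
        - exists D0. split; [left; reflexivity| intros x []].
        - destruct (IHl (fun x hx => hl x (or_intror hx))) as [T [hT hlT]].
          assert (tT : tower D0 (nxt q) T) by (destruct hT as [->|hT]; [constructor|apply HF, hT]).
          destruct (hl a (or_introl eq_refl)) as [ha|[S [hS ha]]].
          + exists T. split; auto. intros x [<-|hx]; [apply (tower_D0 Hinc tT), ha| apply hlT, hx].
          + destruct (chain Hinc tT (HF S hS)) as [h|h].
            * exists S. split; [right; exact hS|]. intros x [<-|hx]; [exact ha| apply h, hlT, hx].
            * exists T. split; auto. intros x [<-|hx]; [apply h, ha| apply hlT, hx]. }
      destruct hT as [->|hT]; [apply H0, hl'| apply (IH T hT), hl'].
  }
  set (M := unionF D0 (tower D0 (nxt q))).
  assert (tM : tower D0 (nxt q) M) by (apply twU; auto).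
  exists M. split; [intros x hx; left; exact hx|]. split; [apply Hc, tM|].
  intros x hx. apply NNPP; intro hnx.
  destruct (nxt_new (ex_intro _ x (conj hnx hx))) as [y [hy1 hy2]].
  apply hy1. right. exists (nxt q M). split; [apply twS, tM| exact hy2].
Qed.
Unset Implicit Arguments.
Ltac bsolve := intros; repeat match goal with H : _ = true |- _ => revert H end; simpl;
  repeat match goal with
  | |- context [peval ?v ?x] => destruct (peval v x)
  | |- context [?v (Dot ?x)] => destruct (v (Dot x))
  | |- context [?v (Atom ?x)] => destruct (v (Atom x))
  end; simpl; intros; try reflexivity; try congruence.

Lemma peval_imp {P : Type} v (a b : form P) :
  peval v (Imp a b) = true <-> (peval v a = true -> peval v b = true).
Proof. simpl. destruct (peval v a), (peval v b); simpl; split; intros; try congruence; auto. Qed.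

Lemma peval_imps {P : Type} v l (f : form P) :
  peval v (imps l f) = true <-> ((forall x, In x l -> peval v x = true) -> peval v f = true).
Proof.
  induction l as [|a l IH]; simpl imps.
  - split; intros h; auto.
  - rewrite peval_imp, IH. split.
    + intros h hl. apply h; [apply hl; left; reflexivity| intros x hx; apply hl; right; exact hx].
    + intros h ha hl. apply h. intros x [<-|hx]; auto.
Qed.

Lemma thm_sem1 {P : Type} (a b : form P) :
  (forall v, peval v a = true -> peval v b = true) -> thm a -> thm b.
Proof. intros H ha. apply (MP (f:=a)); auto. apply AxTaut. intro v. apply peval_imp, H. Qed.

Lemma imps_mono {P : Type} l (a b : form P) :
  (forall v, peval v a = true -> peval v b = true) -> thm (imps l a) -> thm (imps l b).
Proof. intros H. apply thm_sem1. intros v h. apply peval_imps. intros hl.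
  apply H, (proj1 (peval_imps v l a) h hl). Qed.

Lemma imps_swap1 {P : Type} l (a g : form P) : thm (Imp a (imps l g)) -> thm (imps l (Imp a g)).
Proof. apply thm_sem1. intros v h. apply peval_imps. intros hl. apply peval_imp. intros ha.
  apply (proj1 (peval_imps v l g)); auto. apply (proj1 (peval_imp v _ _) h ha). Qed.

Lemma imps_swap2 {P : Type} l (a g : form P) : thm (imps l (Imp a g)) -> thm (Imp a (imps l g)).
Proof. apply thm_sem1. intros v h. apply peval_imp. intros ha. apply peval_imps. intros hl.
  apply (proj1 (peval_imp v a g)); auto. apply (proj1 (peval_imps v l _) h hl). Qed.

Definition bot {P : Type} (p0 : P) : form P := Neg (Top p0).

Lemma removal {P : Type} (G : form P -> Prop) f : forall l g,
  (forall y, In y l -> G y \/ y = f) -> thm (imps l g) ->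
  exists l', (forall y, In y l' -> G y) /\ thm (imps l' (Imp f g)).
Proof.
  induction l as [|a l IH]; intros g hl ht; simpl in ht.
  - exists []. split; [intros y []|]. simpl. eapply thm_sem1; [|exact ht]. bsolve.
  - destruct (IH (Imp a g) (fun y hy => hl y (or_intror hy)) (imps_swap1 l a g ht)) as [l' [hl' ht'']].
    destruct (hl a (or_introl eq_refl)) as [ha|ha].
    + exists (a :: l'). split. { intros y [<-|hy]; auto. }
      simpl. apply imps_swap2. eapply imps_mono; [|exact ht'']. bsolve.
    + subst a. exists l'. split; auto. eapply imps_mono; [|exact ht'']. bsolve.
Qed.

Definition consis {P : Type} (p0 : P) (G : form P -> Prop) :=
  fincons (fun l => ~ thm (imps l (bot p0))) G.
Definition mcs {P : Type} (p0 : P) (w : form P -> Prop) :=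
  consis p0 w /\ forall x, consis p0 (addx w x) -> w x.

Lemma imps_app {P : Type} l1 l2 (g : form P) : imps (l1 ++ l2) g = imps l1 (imps l2 g).
Proof. induction l1; simpl; congruence. Qed.

Lemma mcs_closed {P : Type} (p0 : P) w l f : mcs p0 w -> (forall x, In x l -> w x) ->
  thm (imps l f) -> w f.
Proof.
  intros [hc hm] hl ht. apply hm. intros l2 hl2 ht2.
  destruct (removal w f l2 _ hl2 ht2) as [l3 [hl3 ht3]].
  apply (hc (l ++ l3)). { intros x hx; apply in_app_or in hx; destruct hx; auto. }
  rewrite imps_app. apply (MP (f := imps l3 (Imp f (bot p0)))); auto.
  apply (MP (f := imps l f)); auto. apply AxTaut. intro v.
  apply peval_imp. intro h1. apply peval_imp. intro h2.
  apply peval_imps; intro hl'. apply peval_imps; intro hl3'.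
  apply (proj1 (peval_imp v _ _) (proj1 (peval_imps v l3 _) h2 hl3')).
  apply (proj1 (peval_imps v l f) h1 hl').
Qed.

Lemma mcs_thm {P : Type} (p0 : P) w f : mcs p0 w -> thm f -> w f.
Proof. intros Hw h. apply (mcs_closed p0 w [] f Hw); auto. intros x []. Qed.
Lemma mcs_thm1 {P : Type} (p0 : P) w (a b : form P) : mcs p0 w -> thm (Imp a b) -> w a -> w b.
Proof. intros Hw h ha. apply (mcs_closed p0 w [a] b Hw); auto. intros x [<-|[]]; auto. Qed.
Lemma mcs_thm2 {P : Type} (p0 : P) w (a b c : form P) : mcs p0 w -> thm (Imp a (Imp b c)) -> w a -> w b -> w c.
Proof. intros Hw h ha hb. apply (mcs_closed p0 w [a;b] c Hw); auto. intros x [<-|[<-|[]]]; auto. Qed.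

Lemma mcs_neg {P : Type} (p0 : P) w (a : form P) : mcs p0 w -> (w (Neg a) <-> ~ w a).
Proof.
  intros Hw. split.
  - intros h1 h2. apply (proj1 Hw [a; Neg a]). { intros x [<-|[<-|[]]]; auto. }
    apply AxTaut; intro v; bsolve.
  - intros h. apply (proj2 Hw). intros l hl ht.
    destruct (removal w (Neg a) l _ hl ht) as [l3 [hl3 ht3]].
    apply h. apply (mcs_thm1 p0 w (Imp (Neg a) (bot p0)) a Hw).
    + apply AxTaut; intro v; bsolve.
    + apply (mcs_closed p0 w _ _ Hw hl3 ht3).
Qed.

Lemma mcs_and {P : Type} (p0 : P) w (a b : form P) : mcs p0 w -> (w (And a b) <-> w a /\ w b).
Proof.
  intros Hw. split.
  - intros h. split; eapply (mcs_thm1 p0 w (And a b) _ Hw); auto; apply AxTaut; intro v; bsolve.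
  - intros [ha hb]. apply (mcs_thm2 p0 w a b _ Hw); auto; apply AxTaut; intro v; bsolve.
Qed.

Lemma mcs_or {P : Type} (p0 : P) w (a b : form P) : mcs p0 w -> w (Or a b) -> w a \/ w b.
Proof.
  intros Hw h. destruct (classic (w a)) as [ha|ha]; auto. right.
  apply (mcs_thm2 p0 w (Or a b) (Neg a) _ Hw); auto.
  - apply AxTaut; intro v; bsolve.
  - apply (mcs_neg p0 w a Hw); auto.
Qed.

Ltac taut := apply AxTaut; intro; bsolve.

Section S.
Context {P : Type} (p0 : P) (w : form P -> Prop) (Hw : mcs p0 w).

Lemma dot_re (a b : form P) : w (Dot a) -> thm (Iff a b) -> w (Dot b).
Proof. intros ha h. apply (mcs_thm2 p0 w (Iff (Dot a) (Dot b)) (Dot a) _ Hw); auto.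
  - taut.
  - apply (mcs_thm p0 w _ Hw), RE, h. Qed.

Lemma dot_neg (a : form P) : w (Dot a) <-> w (Dot (Neg a)).
Proof. pose proof (mcs_thm p0 w _ Hw (AxNeg a)).
  split; intro h.
  - apply (mcs_thm2 p0 w (Iff (Dot a) (Dot (Neg a))) (Dot a) _ Hw); auto; taut.
  - apply (mcs_thm2 p0 w (Iff (Dot a) (Dot (Neg a))) (Dot (Neg a)) _ Hw); auto; taut. Qed.

Lemma dot_and (a b : form P) : w (Dot a) -> w (Dot b) -> w (Dot (And a b)).
Proof. intros ha hb. apply (mcs_thm2 p0 w (Dot a) (Dot b) _ Hw); auto.
  eapply thm_sem1; [|exact (AxAnd a b)]. bsolve. Qed.

Lemma dot_or_ax (f g h : form P) : w (Dot f) -> w (Dot (Or f g)) \/ w (Dot (Or (Neg f) h)).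
Proof. intros hf. apply (mcs_or p0 w _ _ Hw). apply (mcs_thm1 p0 w (Dot f) _ Hw); auto. apply AxOr. Qed.

Lemma contra (a chi : form P) : w (Neg (Dot chi)) -> w (Dot (Or a chi)) -> w (Dot (Or (Neg a) chi)) -> False.
Proof. intros hc h1 h2. apply (proj1 (mcs_neg p0 w _ Hw) hc).
  apply (dot_re _ _ (dot_and _ _ h1 h2)). taut. Qed.

Definition Xi (psi : form P) := forall chi, w (Neg (Dot chi)) -> w (Dot psi) /\ w (Dot (Or psi chi)).

Lemma Xi_intro (a chi : form P) : w (Neg (Dot chi)) -> w (Dot a) -> w (Dot (Or a chi)) -> Xi a.
Proof. intros hc ha hac chi' hc'. split; auto.
  destruct (dot_or_ax a chi' chi ha) as [h|h]; auto. exfalso; exact (contra a chi hc hac h). Qed.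

Lemma Xi_mono (a b : form P) : thm (Imp a b) -> Xi a -> Xi b.
Proof. intros hab hx chi hc. destruct (hx chi hc) as [ha hac]. split.
  - destruct (dot_or_ax a b chi ha) as [h|h].
    + apply (dot_re _ _ h). eapply thm_sem1; [|exact hab]. bsolve.
    + exfalso; exact (contra a chi hc hac h).
  - destruct (dot_or_ax (Or a chi) (Or b chi) chi hac) as [h|h].
    + apply (dot_re _ _ h). eapply thm_sem1; [|exact hab]. bsolve.
    + exfalso. apply (contra a chi hc hac). apply (dot_re _ _ h). taut.
Qed.

Lemma Xi_and (a b : form P) : Xi a -> Xi b -> Xi (And a b).
Proof. intros ha hb chi hc. destruct (ha chi hc) as [h1 h2]. destruct (hb chi hc) as [h3 h4].
  split; [apply dot_and; auto|]. apply (dot_re _ _ (dot_and _ _ h2 h4)). taut. Qed.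

Lemma Xi_thm (f : form P) : thm f -> Xi f.
Proof. intros hf chi _. pose proof (mcs_thm p0 w _ Hw (AxTop p0)) as ht. split.
  - apply (dot_re _ _ ht). eapply thm_sem1; [|exact hf]. bsolve.
  - apply (dot_re _ _ ht). eapply thm_sem1; [|exact hf]. bsolve. Qed.

Lemma Xi_closed : forall l (f : form P), (forall x, In x l -> Xi x) -> thm (imps l f) -> Xi f.
Proof.
  induction l as [|a l IH]; intros f hl ht; simpl in ht.
  - apply Xi_thm, ht.
  - assert (h : Xi (Imp a f)).
    { apply IH; [intros x hx; apply hl; right; exact hx| apply imps_swap1, ht]. }
    apply (Xi_mono (And (Imp a f) a)); [taut|]. apply Xi_and; auto. apply hl; left; reflexivity.
Qed.

End S.

Definition Rc {P : Type} (w t : form P -> Prop) :=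
  (exists chi, w (Neg (Dot chi))) /\ forall psi, Xi w psi -> t psi.

Definition cmodel {P : Type} (p0 : P) : model P :=
  {| st := {w : form P -> Prop | mcs p0 w};
     R1 := fun s t => Rc (proj1_sig s) (proj1_sig t);
     R2 := fun s t => Rc (proj1_sig s) (proj1_sig t);
     V := fun p s => proj1_sig s (Atom p) |}.

Lemma ext_mcs {P : Type} (p0 : P) (D : form P -> Prop) : consis p0 D ->
  exists t, mcs p0 t /\ subset D t.
Proof. intros h. destruct (lindenbaum h) as [M [h1 [h2 h3]]]. exists M. split; auto. split; auto. Qed.

Lemma truth {P : Type} (p0 : P) : forall f (s : st (cmodel p0)), sat (cmodel p0) s f <-> proj1_sig s f.
Proof.
  induction f as [p|a IH|a IHa b IHb|a IH]; intros [w Hw]; simpl.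
  - reflexivity.
  - rewrite (IH (exist _ w Hw)), (mcs_neg p0 w a Hw). reflexivity.
  - rewrite (IHa (exist _ w Hw)), (IHb (exist _ w Hw)), (mcs_and p0 w a b Hw). reflexivity.
  - split.
    + intro H. apply NNPP; intro hn.
      assert (hna : w (Neg (Dot a))) by (apply (mcs_neg p0 w _ Hw), hn).
      assert (ct : consis p0 (addx (Xi w) a)).
      { intros l hl ht. destruct (removal (Xi w) a l _ hl ht) as [l' [hl' ht']].
        pose proof (Xi_closed p0 w Hw l' _ hl' ht') as hx.
        apply hn. apply (dot_neg p0 w Hw).
        refine (proj1 (Xi_mono p0 w Hw _ (Neg a) _ hx a hna)). taut. }
      assert (cu : consis p0 (addx (Xi w) (Neg a))).
      { intros l hl ht. destruct (removal (Xi w) (Neg a) l _ hl ht) as [l' [hl' ht']].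
        pose proof (Xi_closed p0 w Hw l' _ hl' ht') as hx.
        apply hn.
        refine (proj1 (Xi_mono p0 w Hw _ a _ hx a hna)). taut. }
      destruct (ext_mcs p0 _ ct) as [t [Ht st]].
      destruct (ext_mcs p0 _ cu) as [u [Hu su]].
      assert (rt : Rc w t) by (split; [exists a; exact hna| intros psi hp; apply st; left; exact hp]).
      assert (ru : Rc w u) by (split; [exists a; exact hna| intros psi hp; apply su; left; exact hp]).
      specialize (H (exist _ t Ht) (exist _ u Hu) rt ru).
      rewrite (IH (exist _ t Ht)), (IH (exist _ u Hu)) in H. simpl in H.
      apply (proj1 (mcs_neg p0 u a Hu) (su _ (or_intror eq_refl))).
      apply H, st. right; reflexivity.
    + intros hD [t Ht] [u Hu] [[chi hc] rt] [_ ru]. simpl in *.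
      rewrite (IH (exist _ t Ht)), (IH (exist _ u Hu)). simpl.
      destruct (dot_or_ax p0 w Hw a chi chi hD) as [h|h].
      * assert (hx : Xi w a) by (apply (Xi_intro p0 w Hw a chi); auto).
        split; intros _; auto.
      * assert (hx : Xi w (Neg a)) by (apply (Xi_intro p0 w Hw (Neg a) chi hc (proj1 (dot_neg p0 w Hw a) hD) h)).
        pose proof (rt _ hx) as h1. pose proof (ru _ hx) as h2.
        rewrite (mcs_neg p0 t a Ht) in h1. rewrite (mcs_neg p0 u a Hu) in h2. tauto.
Qed.


Lemma sat_imp {P : Type} (M : model P) s a b : sat M s (Imp a b) <-> (sat M s a -> sat M s b).
Proof. simpl. split; [intros h ha; apply NNPP; intro hb; apply h; auto| intros h [ha hb]; auto]. Qed.

Lemma sat_or {P : Type} (M : model P) s a b : sat M s (Or a b) <-> (sat M s a \/ sat M s b).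
Proof. simpl. split.
  - intro h. destruct (classic (sat M s a)); auto. right; apply NNPP; intro; apply h; auto.
  - intros [h|h] [h1 h2]; auto. Qed.

Lemma sat_iff {P : Type} (M : model P) s a b : sat M s (Iff a b) <-> (sat M s a <-> sat M s b).
Proof. change (sat M s (Imp a b) /\ sat M s (Imp b a) <-> (sat M s a <-> sat M s b)).
  rewrite !sat_imp. tauto. Qed.

Definition bv {P : Type} (M : model P) s (f : form P) : bool :=
  if excluded_middle_informative (sat M s f) then true else false.

Lemma bv_peval {P : Type} (M : model P) s f : peval (bv M s) f = true <-> sat M s f.
Proof.
  induction f as [p|a IH|a IHa b IHb|a]; simpl.
  - unfold bv; destruct excluded_middle_informative; split; intros; auto; try discriminate; contradiction.
  - rewrite <- IH. destruct (peval (bv M s) a); simpl; split; intros; try congruence; try reflexivity.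
  - rewrite andb_true_iff, IHa, IHb. reflexivity.
  - unfold bv; destruct excluded_middle_informative; split; intros; auto; try discriminate; contradiction.
Qed.

Lemma sound_thm {P : Type} (f : form P) : thm f -> forall M s, sat M s f.
Proof.
  induction 1 as [f H|p|f|f g|f g h|f g _ IH1 _ IH2|f g _ IH]; intros M s.
  - apply bv_peval, H.
  - simpl. intros. tauto.
  - apply sat_iff. simpl. split; intros hD t u h1 h2; specialize (hD t u h1 h2).
    + tauto.
    + destruct (classic (sat M t f)), (classic (sat M u f)); tauto.
  - apply sat_imp. simpl. intros [hf hg] t u h1 h2. specialize (hf t u h1 h2). specialize (hg t u h1 h2). tauto.
  - apply sat_imp. intro hD. apply sat_or.
    destruct (classic (exists t0 u0, R1 M s t0 /\ R2 M s u0)) as [[t0 [u0 [h1 h2]]]|hn].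
    + destruct (classic (sat M t0 f)) as [hf|hf].
      * left. intros t u ht hu. rewrite !sat_or.
        assert (sat M t f) by (pose proof (hD t u0 ht h2); pose proof (hD t0 u0 h1 h2); tauto).
        assert (sat M u f) by (pose proof (hD t0 u h1 hu); tauto).
        split; intros _; left; assumption.
      * right. intros t u ht hu. rewrite !sat_or.
        assert (sat M t (Neg f)) by (pose proof (hD t u0 ht h2); pose proof (hD t0 u0 h1 h2); simpl; tauto).
        assert (sat M u (Neg f)) by (pose proof (hD t0 u h1 hu); simpl; tauto).
        split; intros _; left; assumption.
    + left. intros t u ht hu. exfalso; apply hn; eauto.
  - apply (proj1 (sat_imp M s f g) (IH1 M s) (IH2 M s)).
  - apply sat_iff. simpl. split; intros hD t u ht hu; specialize (hD t u ht hu);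
    pose proof (proj1 (sat_iff M t f g) (IH M t)); pose proof (proj1 (sat_iff M u f g) (IH M u)); tauto.
Qed.

Lemma sound_imps {P : Type} (M : model P) s l f : sat M s (imps l f) -> (forall x, In x l -> sat M s x) -> sat M s f.
Proof. induction l as [|a l IH]; simpl; intros h hl; auto.
  apply IH; [apply (proj1 (sat_imp M s _ _) h), hl; left; reflexivity| intros; apply hl; right; auto]. Qed.

Theorem theorem7 (P : Type) (HP : inhabited P) (Gamma : form P -> Prop) (phi : form P) :
  deriv Gamma phi <->
  (forall (M : model P) (s : st M),
      (forall g, Gamma g -> sat M s g) -> sat M s phi).
Proof.
  split.
  - intros [l [hl ht]] M s hG. apply (sound_imps M s l); [apply sound_thm, ht| intros; apply hG, hl; auto].
  - intros H. destruct HP as [p0]. apply NNPP; intro hn.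
    assert (hc : consis p0 (addx Gamma (Neg phi))).
    { intros l hl ht. destruct (removal Gamma (Neg phi) l _ hl ht) as [l' [hl' ht']].
      apply hn. exists l'. split; auto. eapply imps_mono; [|exact ht']. bsolve. }
    destruct (ext_mcs p0 _ hc) as [w [Hw h0]].
    pose (s := exist (mcs p0) w Hw : st (cmodel p0)).
    assert (hs : sat (cmodel p0) s phi).
    { apply H. intros g hg. apply (truth p0 g s). apply h0. left; exact hg. }
    apply (truth p0 phi s) in hs. simpl in hs.
    apply (proj1 (mcs_neg p0 w phi Hw) (h0 _ (or_intror eq_refl))). exact hs.
Qed.
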